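(* Let $(\Gamma,\tau)$ be a $z$-oriented triangulation of a connected closed $2$-dimensional surface. If $(\Gamma,\tau)$ has a face of type I, then the Markov chain $\mathcal{X}_{\tau}$ is ergodic.
   Context: A triangulation $\Gamma$ of a connected closed surface $M$ (not necessarily orientable) is a closed $2$-cell embedding of a connected finite simple graph in $M$ all of whose faces are triangles. Two edges are adjacent if distinct and in a common face; two faces are adjacent if distinct and their intersection is an edge. A zigzag is a sequence of edges $(e_i)_{i\in\mathbb{N}}$ such that for every $i$: $e_i,e_{i+1}$ are adjacent, the faces containing $e_i,e_{i+1}$ and $e_{i+1},e_{i+2}$ are adjacent, and $e_i,e_{i+2}$ are disjoint; it is a cyclic sequence, equivalently a cyclic vertex sequence $v_1,\dots,v_n$ with $e_i=v_iv_{i+1}$, traversing $e_i$ from $v_i$ to $v_{i+1}$. A $z$-orientation $\tau$ is a set of zigzags containing exactly one of $Z,Z^{-1}$ (reversed zigzag) for every zigzag $Z$. Every edge is traversed exactly twice in total by zigzags of $\tau$; it is of type I if in opposite directions, of type II if in the same direction (then regarded as directed that way). Each face has either two type I edges and one type II edge (face of type I) or three type II edges forming a directed cycle (face of type II). For $v\in V=\{v_1,\dots,v_n\}$ let $d(v)$ be the number of type I edges at $v$ plus twice the number of type II edges directed out of $v$. $\mathcal{X}_{\tau}$ is the time-homogeneous Markov chain on $V$ with $p_{ij}=1/d(v_i)$ if $v_iv_j$ is a type I edge, $p_{ij}=2/d(v_i)$ if $v_iv_j$ is a type II edge directed from $v_i$ to $v_j$, $p_{ij}=0$ otherwise. Ergodic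 means irreducible and aperiodic. *)

(* Defs.v *)
From mathcomp Require Import all_boot all_order all_algebra.
Set Implicit Arguments. Unset Strict Implicit. Unset Printing Implicit Defensive.
Import Order.TTheory GRing.Theory Num.Theory.

Section Triangulation.
Variable V : finType.

(* A triangulation is given by its vertex type V and its set of faces F,
   each face being the (3-element) set of its vertices. *)
Variable F : {set {set V}}.

Definition adj : rel V :=
  fun u w => (u != w) && [exists f in F, (u \in f) && (w \in f)].

Definition link_rel (v : V) : rel V := fun u w => [set v; u; w] \in F.

Definition triangulation : Prop :=
  [/\ F != set0 /\ (forall f, f \in F -> #|f| = 3),
      (forall v : V, exists2 f, f \in F & v \in f),
      (forall u w : V, adj u w -> #|[set f in F | (u \in f) && (w \in f)]| = 2),
      (* the link of every vertex is connected (so a single cycle): closed surface *)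
      (forall v u w : V, adj v u -> adj v w -> connect (link_rel v) u w) &
      (forall u w : V, connect adj u w)].

(* Zigzags.  A zigzag is given by its vertex sequence z, e_i = z_i z_(i+1). *)
Definition zz_edge (z : nat -> V) (i : nat) : {set V} := [set z i; z i.+1].

Definition is_zigzag_seq (z : nat -> V) : Prop :=
  forall i : nat,
    [/\ #|zz_edge z i| = 2,
        (* e_i, e_(i+1) adjacent: distinct and in a common face *)
        zz_edge z i != zz_edge z i.+1,
        (exists2 f, f \in F & (zz_edge z i :|: zz_edge z i.+1) \subset f),
        (* the faces containing e_i,e_(i+1) and e_(i+1),e_(i+2) are adjacent *)
        (zz_edge z i :|: zz_edge z i.+1) != (zz_edge z i.+1 :|: zz_edge z i.+2)
        /\ #|(zz_edge z i :|: zz_edge z i.+1) :&: (zz_edge z i.+1 :|: zz_edge z i.+2)| = 2 &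
        [disjoint zz_edge z i & zz_edge z i.+2]].

(* A zigzag (cyclic sequence) is represented by the set of its consecutive
   vertex triples (z_i, z_(i+1), z_(i+2)); this determines the cyclic
   sequence, and is invariant under cyclic shift. *)
Definition is_zigzag (Z : {set V * V * V}) : Prop :=
  exists z : nat -> V, is_zigzag_seq z /\
    (forall s, s \in Z <-> exists i, s = (z i, z i.+1, z i.+2)).

Definition rev_zz (Z : {set V * V * V}) : {set V * V * V} :=
  [set (s.2, s.1.2, s.1.1) | s in Z].

Definition z_orientation (tau : {set {set V * V * V}}) : Prop :=
  (forall Z, Z \in tau -> is_zigzag Z) /\
  (forall Z, is_zigzag Z -> #|tau :&: [set Z; rev_zz Z]| = 1).

Variable tau : {set {set V * V * V}}.

(* number of times the zigzags of tau traverse the edge from u to w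
   (= number of i modulo the period with (z_i, z_(i+1)) = (u, w)) *)
Definition trav (u w : V) : nat :=
  \sum_(Z in tau) #|[set s in Z | (s.1.1 == u) && (s.1.2 == w)]|.

Definition typeI (u w : V) : bool := (trav u w == 1) && (trav w u == 1).
Definition typeII (u w : V) : bool := (trav u w == 2) && (trav w u == 0).

Definition has_face_typeI : Prop :=
  exists a b c : V, [/\ [set a; b; c] \in F, typeI a b, typeI b c &
                        typeII a c || typeII c a].

Definition zdeg (v : V) : nat := \sum_(w : V) (typeI v w + 2 * typeII v w).

Definition ptrans (v w : V) : rat :=
  (((typeI v w)%:R + 2 * (typeII v w)%:R) / (zdeg v)%:R)%R.

End Triangulation.

Fixpoint nstep (T : finType) (p : T -> T -> rat) (k : nat) (i j : T) : rat :=
  match k with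
  | 0 => ((i == j)%:R)%R
  | k'.+1 => (\sum_(l : T) p i l * nstep p k' l j)%R
  end.

Definition irreducible (T : finType) (p : T -> T -> rat) : Prop :=
  forall i j : T, exists k, (0 < nstep p k i j)%R.

(* every state has period gcd{k >= 1 | P^k(i,i) > 0} equal to 1 *)
Definition aperiodic (T : finType) (p : T -> T -> rat) : Prop :=
  forall (i : T) (d : nat),
    (forall k, 0 < k -> (0 < nstep p k i i)%R -> d %| k) -> d = 1.

Definition ergodic (T : finType) (p : T -> T -> rat) : Prop :=
  irreducible p /\ aperiodic p.

(* Main.v *)
Require Import Defs.
From mathcomp Require Import all_boot all_order all_algebra.
From mathcomp Require Import zify.
From Stdlib Require Import ClassicalEpsilon.
Set Implicit Arguments. Unset Strict Implicit. Unset Printing Implicit Defensive.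

Lemma nsym (T : eqType) (a b : T) : a != b -> b != a.
Proof. by rewrite eq_sym. Qed.

Section Geo.
Variable V : finType.
Variable F : {set {set V}}.
Hypothesis hF3 : forall f, f \in F -> #|f| = 3.
Hypothesis h2 : forall u w : V, adj F u w ->
  #|[set f in F | (u \in f) && (w \in f)]| = 2.

Definition T3 (x y w : V) : {set V} := [set x; y; w].

Lemma T3_rot x y w : T3 x y w = T3 y w x.
Proof. by apply/setP => v; rewrite !inE; case: (v == x); case: (v == y); case: (v == w). Qed.
Lemma T3_rev x y w : T3 x y w = T3 w y x.
Proof. by apply/setP => v; rewrite !inE; case: (v == x); case: (v == y); case: (v == w). Qed.

Lemma card_T3 x y w : x != y -> x != w -> y != w -> #|T3 x y w| = 3.
Proof.
move=> xy xw yw.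
have -> : T3 x y w = x |: [set y; w] by apply/setP => v; rewrite !inE orbA.
by rewrite cardsU1 cards2 !inE negb_or xy xw yw.
Qed.

Definition valid (s : V * V * V) : bool :=
  [&& s.1.1 != s.1.2, s.1.1 != s.2, s.1.2 != s.2 & T3 s.1.1 s.1.2 s.2 \in F].

Lemma valid_rot x y w : valid (x, y, w) -> valid (y, w, x).
Proof.
case/and4P => /= xy xw yw hF; apply/and4P; split => //=;
  [by rewrite eq_sym | by rewrite eq_sym | by rewrite -T3_rot].
Qed.

Lemma valid_rev x y w : valid (x, y, w) -> valid (w, y, x).
Proof.
case/and4P => /= xy xw yw hF; apply/and4P; split => //=; rewrite 1?eq_sym //.
by rewrite -T3_rev.
Qed.

Lemma valid_adj x y w : valid (x, y, w) -> adj F y w.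
Proof.
case/and4P => /= xy xw yw hF; rewrite /adj yw /=; apply/existsP; exists (T3 x y w).
by rewrite hF !inE !eqxx !orbT.
Qed.

Lemma third_vertex f u w : f \in F -> u != w -> u \in f -> w \in f ->
  exists2 a, valid (u, w, a) & f = T3 u w a.
Proof.
move=> fF uw uf wf.
have sub : [set u; w] \subset f by apply/subsetP => v; rewrite !inE => /orP[]/eqP->.
have : #|f :\: [set u; w]| == 1 by rewrite cardsDS // hF3 // cards2 uw.
case/cards1P => a ha.
have : a \in f :\: [set u; w] by rewrite ha inE.
rewrite !inE negb_or => /andP[/andP[au aw] af].
have ef : f = T3 u w a.
  apply/eqP; rewrite eq_sym eqEcard hF3 // card_T3 1?(eq_sym _ a) // leqnn andbT.
  by apply/subsetP => v; rewrite !inE => /orP[/orP[]|]/eqP->.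
exists a => //; apply/and4P; split; rewrite // ?(eq_sym _ a) //= -ef //.
Qed.

Lemma two_faces u w : adj F u w -> exists a b, [/\ a != b, valid (u, w, a), valid (u, w, b) &
  forall c, valid (u, w, c) -> c = a \/ c = b].
Proof.
move=> huw; have := h2 huw; move/eqP/cards2P => [f1 [f2 [f12 eS]]].
have uw : u != w by case/andP: huw.
have : f1 \in [set f in F | (u \in f) && (w \in f)] by rewrite eS !inE eqxx.
rewrite inE => /andP[f1F /andP[uf1 wf1]].
have : f2 \in [set f in F | (u \in f) && (w \in f)] by rewrite eS !inE eqxx orbT.
rewrite inE => /andP[f2F /andP[uf2 wf2]].
have [a va ea] := third_vertex f1F uw uf1 wf1.
have [b vb eb] := third_vertex f2F uw uf2 wf2.
exists a, b; split => //.
  by apply: contraNneq f12 => ab; rewrite ea eb ab.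
move=> c vc.
have : T3 u w c \in [set f in F | (u \in f) && (w \in f)].
  by case/and4P: vc => /= _ _ _ hc; rewrite inE hc !inE !eqxx /= orbT.
case/and4P: vc => /= _ uc wc _.
rewrite eS !inE => /orP[]/eqP e.
  left; have : c \in T3 u w c by rewrite !inE eqxx orbT.
  by rewrite e ea !inE (eq_sym c u) (eq_sym c w) (negbTE uc) (negbTE wc) /= => /eqP.
right; have : c \in T3 u w c by rewrite !inE eqxx orbT.
by rewrite e eb !inE (eq_sym c u) (eq_sym c w) (negbTE uc) (negbTE wc) /= => /eqP.
Qed.

Lemma third y w x v v' : valid (y, w, x) -> valid (y, w, v) -> valid (y, w, v') ->
  v != x -> v' != x -> v = v'.
Proof.
move=> vx vv vv' nx nx'.
have [a [b [ab va vb H]]] := two_faces (valid_adj (valid_rot (valid_rot vx))).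
move: nx nx'.
by case: (H _ vx) => ->; case: (H _ vv) => ->; case: (H _ vv') => ->; rewrite ?eqxx.
Qed.

Lemma other y w x : valid (y, w, x) -> exists2 v, valid (y, w, v) & v != x.
Proof.
move=> vx.
have [a [b [ab va vb H]]] := two_faces (valid_adj (valid_rot (valid_rot vx))).
case: (H _ vx) => ->; [exists b => //; by rewrite eq_sym | by exists a].
Qed.


Definition trip (z : nat -> V) i := (z i, z i.+1, z i.+2).
Definition good (z : nat -> V) := forall i, valid (trip z i) && (z i != z i.+3).

Lemma gv z i : good z -> valid (trip z i).
Proof. by move=> g; case/andP: (g i). Qed.
Lemma g3 z i : good z -> z i != z i.+3.
Proof. by move=> g; case/andP: (g i). Qed.

Lemma union_T3 a b c : [set a; b] :|: [set b; c] = T3 a b c.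
Proof. by apply/setP => v; rewrite !inE; case: (v == a); case: (v == b); case: (v == c). Qed.

Lemma seq_good z : is_zigzag_seq F z -> good z.
Proof.
move=> H i; have [c1 c2 [f fF sub] [c4 c4'] c5] := H i.
have [d1 _ _ _ _] := H i.+1.
have n01 : z i != z i.+1 by move: c1; rewrite /zz_edge cards2; case: (_ != _).
have n12 : z i.+1 != z i.+2 by move: d1; rewrite /zz_edge cards2; case: (_ != _).
have n02 : z i != z i.+2.
  by apply: contraNneq c2 => e; apply/eqP; rewrite /zz_edge e setUC.
rewrite /zz_edge !union_T3 in sub c4.
have TF : T3 (z i) (z i.+1) (z i.+2) \in F.
  have -> // : T3 (z i) (z i.+1) (z i.+2) = f.
  by apply/eqP; rewrite eqEcard sub hF3 // card_T3.
apply/andP; split; first by apply/and4P; split.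
apply: contraNneq c4 => e; by rewrite -e (T3_rot (z i)).
Qed.

Lemma good_seq z : good z -> is_zigzag_seq F z.
Proof.
move=> g i.
have /and4P[/= n01 n02 n12 TF] := gv i g.
have /and4P[/= _ n13 n23 _] := gv i.+1 g.
have n03 := g3 i g.
have L := (negbTE n01, negbTE n02, negbTE n12, negbTE n03, negbTE n13, negbTE n23,
  negbTE (nsym n01), negbTE (nsym n02), negbTE (nsym n12),
  negbTE (nsym n03), negbTE (nsym n13), negbTE (nsym n23)).
split.
- by rewrite /zz_edge cards2 n01.
- apply/negP => /eqP e.
  have : z i \in zz_edge z i.+1 by rewrite -e !inE eqxx.
  by rewrite !inE !L.
- by exists (T3 (z i) (z i.+1) (z i.+2)); rewrite // /zz_edge union_T3.
- rewrite /zz_edge !union_T3; split.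
    apply/negP => /eqP e.
    have : z i \in T3 (z i.+1) (z i.+2) (z i.+3) by rewrite -e !inE eqxx.
    by rewrite !inE !L.
  have -> : T3 (z i) (z i.+1) (z i.+2) :&: T3 (z i.+1) (z i.+2) (z i.+3) = [set z i.+1; z i.+2].
    apply/setP => v; rewrite !inE.
    have [->|h0] := eqVneq v (z i); first by rewrite ?eqxx !L.
    have [->|h3] := eqVneq v (z i.+3); first by rewrite ?eqxx !L.
    rewrite ?(negbTE h0) ?(negbTE h3) /=.
    by case: (v == z i.+1); case: (v == z i.+2).
  by rewrite cards2 n12.
- rewrite -setI_eq0; apply/eqP/setP => v; rewrite !inE.
  have [->|h0] := eqVneq v (z i); first by rewrite ?eqxx !L.
  have [->|h1] := eqVneq v (z i.+1); first by rewrite ?eqxx !L.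
  by rewrite ?(negbTE h0) ?(negbTE h1).
Qed.

Lemma D1 z z' i j : good z -> good z' -> z i = z' j -> z i.+1 = z' j.+1 ->
  z i.+2 = z' j.+2 -> z i.+3 = z' j.+3.
Proof.
move=> g g' e0 e1 e2.
apply: (@third (z i.+1) (z i.+2) (z i)).
- exact: valid_rot (gv i g).
- exact: (gv i.+1 g).
- by rewrite e1 e2; exact: (gv j.+1 g').
- exact: nsym (g3 i g).
- by rewrite e0; exact: nsym (g3 j g').
Qed.

Lemma D2 z z' i j : good z -> good z' -> z i.+1 = z' j.+1 -> z i.+2 = z' j.+2 ->
  z i.+3 = z' j.+3 -> z i = z' j.
Proof.
move=> g g' e1 e2 e3.
apply: (@third (z i.+1) (z i.+2) (z i.+3)).
- exact: (gv i.+1 g).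
- exact: valid_rot (gv i g).
- by rewrite e1 e2; exact: valid_rot (gv j g').
- exact: (g3 i g).
- by rewrite e3; exact: (g3 j g').
Qed.

Lemma D3 z z' a b : good z -> good z' -> z a = z' b.+3 -> z a.+1 = z' b.+2 ->
  z a.+2 = z' b.+1 -> z a.+3 = z' b.
Proof.
move=> g g' e0 e1 e2.
apply: (@third (z a.+1) (z a.+2) (z a)).
- exact: valid_rot (gv a g).
- exact: (gv a.+1 g).
- by rewrite e1 e2; exact: valid_rev (gv b g').
- exact: nsym (g3 a g).
- by rewrite e0; exact: (g3 b g').
Qed.

Lemma fwd z z' i j : good z -> good z' -> trip z i = trip z' j ->
  forall n, trip z (n + i) = trip z' (n + j).
Proof.
move=> g g' e; elim=> [//|n IH].
rewrite !addSn; case: IH => e0 e1 e2.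
by rewrite /trip e1 e2 (D1 g g' e0 e1 e2).
Qed.

Lemma bwd z z' i j : good z -> good z' -> trip z i.+1 = trip z' j.+1 -> trip z i = trip z' j.
Proof.
move=> g g'; case=> e1 e2 e3.
by rewrite /trip (D2 g g' e1 e2 e3) e1 e2.
Qed.

Lemma back0 z : good z -> forall i j, i <= j -> trip z i = trip z j -> trip z 0 = trip z (j - i).
Proof.
move=> g; elim=> [j _ e|i IH [//|j] hij e]; first by rewrite subn0 e.
by rewrite subSS; apply: IH => //; apply: bwd.
Qed.

Lemma period z : good z -> exists2 p, 0 < p & forall i, z (i + p) = z i.
Proof.
move=> g.
pose f := fun k : 'I_(#|{: V * V * V}|.+1) => trip z k.
have : ~ injective f by move/leq_card; rewrite card_ord ltnn.
have [/existsP[k1 /existsP[k2 /andP[nk ek]]]|H] :=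
   boolP [exists k1, exists k2, (k1 != k2) && (f k1 == f k2)]; last first.
  case; move=> k1 k2 e; apply/eqP; apply: contraNT H => nk.
  by apply/existsP; exists k1; apply/existsP; exists k2; rewrite nk e eqxx.
move=> _; move/eqP: ek; rewrite /f.
wlog lt : k1 k2 nk / (k1 < k2)%N.
  move=> W; have [h|h|h] := ltngtP k1 k2; first exact: W.
    by move=> e; apply: (W k2 k1) => //; rewrite eq_sym.
  by move/val_inj: h => h; rewrite h eqxx in nk.
move=> e; have e0 := back0 g (ltnW lt) e.
exists (k2 - k1); first by rewrite subn_gt0.
move=> i; have := fwd g g e0 i.
by rewrite addn0; case.
Qed.

Lemma shiftP (z : nat -> V) p : (forall i, z (i + p) = z i) -> forall m i, z (i + m * p) = z i.
Proof.
move=> hp; elim=> [i|m IH i]; first by rewrite mul0n addn0.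
have -> : i + m.+1 * p = (i + m * p) + p by rewrite mulSn; lia.
by rewrite hp IH.
Qed.

Definition trips z (s : V * V * V) := exists i, s = trip z i.

Lemma shift_trips z : good z -> forall k s, trips z s -> exists i, s = trip z (i + k).
Proof.
move=> g k s [i ->]; have [p p0 hp] := period g.
have hk : k <= i + k * p by apply: leq_trans (leq_pmulr k p0) (leq_addl i (k * p)).
exists (i + k * p - k); rewrite subnK //.
have h := shiftP hp k.
by rewrite /trip -!addSn !h.
Qed.

Lemma uniq_trips z z' i j : good z -> good z' -> trip z i = trip z' j ->
  forall s, trips z s -> trips z' s.
Proof.
move=> g g' e s /(shift_trips g i) [n ->].
by exists (n + j); apply: fwd.
Qed.

Definition asb (P : Prop) : bool := if excluded_middle_informative P then true else false.
Lemma asbP (P : Prop) : asb P <-> P.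
Proof. by rewrite /asb; case: excluded_middle_informative. Qed.

Definition zset z : {set V * V * V} := [set s | asb (trips z s)].
Lemma zsetP z s : s \in zset z <-> trips z s.
Proof. by rewrite inE asbP. Qed.

Lemma zset_zz z : good z -> is_zigzag F (zset z).
Proof. by move=> g; exists z; split; [exact: good_seq | move=> s; rewrite zsetP]. Qed.

Lemma zz_of Z : is_zigzag F Z -> exists z, good z /\ forall s, s \in Z <-> trips z s.
Proof. by case=> z [/seq_good g h]; exists z. Qed.

Lemma zz_unique Z1 Z2 s : is_zigzag F Z1 -> is_zigzag F Z2 -> s \in Z1 -> s \in Z2 -> Z1 = Z2.
Proof.
move=> /zz_of [z1 [g1 h1]] /zz_of [z2 [g2 h2']] /h1 [i ei] /h2' [j ej].
have e : trip z1 i = trip z2 j by rewrite -ei -ej.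
apply/setP => t; apply/idP/idP => [/h1 ht|/h2' ht]; apply/h2'||apply/h1.
  exact: uniq_trips g1 g2 e t ht.
exact: uniq_trips g2 g1 (esym e) t ht.
Qed.

Lemma rev_seq z : good z -> exists r, good r /\ forall k, exists i, trip r k = (z i.+2, z i.+1, z i).
Proof.
move=> g; have [p p0 hp] := period g.
pose r k := z (p * k.+3 - k).
have rk : forall k j, j <= 3 -> r (k + j) = z ((p * k.+3 - k - 3) + (3 - j)).
  move=> k j hj; rewrite /r.
  have hA : k.+3 <= p * k.+3 by rewrite leq_pmull.
  have -> : p * (k + j).+3 - (k + j) = (p * k.+3 - k - 3) + (3 - j) + j * p.
    have -> : (k + j).+3 = k.+3 + j by lia.
    rewrite mulnDr (mulnC p j); move: hA; set A := p * k.+3; set B := j * p; lia.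
  exact: shiftP hp j _.
have E : forall k, [/\ r k = z (p * k.+3 - k - 3).+3, r k.+1 = z (p * k.+3 - k - 3).+2,
   r k.+2 = z (p * k.+3 - k - 3).+1 & r k.+3 = z (p * k.+3 - k - 3)].
  move=> k; split.
  - by have := rk k 0 isT; rewrite addn0 addn3.
  - by have := rk k 1 isT; rewrite addn1 addn2.
  - by have := rk k 2 isT; rewrite addn2 addn1.
  - by have := rk k 3 isT; rewrite addn3 addn0.
exists r; split.
  move=> k; have [e0 e1 e2 e3] := E k.
  rewrite /trip e0 e1 e2 e3; apply/andP; split.
    exact: valid_rev (gv _ g).
  exact: nsym (g3 _ g).
move=> k; have [e0 e1 e2 _] := E k.
by exists (p * k.+3 - k - 3).+1; rewrite /trip e0 e1 e2.
Qed.

Lemma rev_zz_zz Z : is_zigzag F Z -> is_zigzag F (rev_zz Z).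
Proof.
move=> /zz_of [z [g hZ]].
have [r [gr hr]] := rev_seq g.
have [rr [grr hrr]] := rev_seq gr.
have [j hj] := hrr 0; have [l hl] := hr j.
case: hl => el2 el1 el0.
have e : trip rr 0 = trip z l by rewrite hj /trip el2 el1 el0.
exists r; split; first exact: good_seq.
move=> s; split.
  case/imsetP => s' /hZ [i ->] ->.
  have [k ek] := uniq_trips g grr (esym e) (ex_intro _ i erefl).
  have [j' hj'] := hrr k.
  move: ek; rewrite hj' /trip; case=> -> -> ->.
  by exists j'.
case=> k ->; have [i hi] := hr k.
move: hi; rewrite /trip => ->; apply/imsetP; exists (trip z i); first by apply/hZ; exists i.
by [].
Qed.

Lemma rev_neq Z : is_zigzag F Z -> rev_zz Z != Z.
Proof.
move=> zz; have [z [g hZ]] := zz_of zz.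
apply/negP => /eqP e.
have : (z 2, z 1, z 0) \in Z.
  by rewrite -e; apply/imsetP; exists (trip z 0) => //; apply/hZ; exists 0.
move/hZ => [c hc].
have cl : forall k, k <= c -> (z k.+2, z k.+1, z k) = trip z (c - k).
  elim=> [_|k IH hk]; first by rewrite subn0.
  have := IH (ltnW hk).
  have -> : c - k = (c - k.+1).+1 by lia.
  case=> e0 e1 e2.
  rewrite /trip (D3 g g e2 e1 e0) e0 e1.
  by [].
have := odd_double_half c; rewrite -addnn.
have hle : c./2 <= c by lia.
case: (odd c) => /= hc2.
  have := cl c./2 hle; have -> : c - c./2 = c./2.+1 by lia.
  move=> H; have eq : z c./2.+1 = z c./2.+2 by case: H.
  by have /and4P[/= ne _ _ _] := gv c./2.+1 g; rewrite /= eq eqxx in ne.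
have := cl c./2 hle; have -> : c - c./2 = c./2 by lia.
move=> H; have eq : z c./2.+2 = z c./2 by case: H.
by have /and4P[/= _ ne _ _] := gv c./2 g; rewrite /= eq eqxx in ne.
Qed.

Definition nxt (x y w : V) : V := odflt x [pick v | valid (y, w, v) && (v != x)].

Lemma nxt_spec x y w : valid (x, y, w) -> valid (y, w, nxt x y w) && (nxt x y w != x).
Proof.
move=> vx; rewrite /nxt; case: pickP => [v //|none].
have [v k1 k2] := other (valid_rot vx).
by have := none v; rewrite k1 k2.
Qed.

Definition zstep (s : V * V * V) := (s.1.2, s.2, nxt s.1.1 s.1.2 s.2).

Lemma gen t : valid t -> exists z, good z /\ trip z 0 = t.
Proof.
move=> vt.
pose st n := iter n zstep t.
have vs : forall n, valid (st n).
  elim=> [//|n IH]; rewrite /st iterS -/(st n).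
  case: (st n) IH => [[x y] w] IH.
  by case/andP: (nxt_spec IH).
pose z n := (st n).1.1.
have tz : forall n, trip z n = st n.
  move=> n; rewrite /trip /z /st !iterS -/(st n).
  by case: (st n) => [[x y] w].
exists z; split; last by rewrite tz.
move=> n; rewrite tz vs /=.
have := vs n; rewrite /z /st !iterS -/(st n).
case: (st n) => [[x y] w] /= /nxt_spec /andP[_].
by rewrite eq_sym.
Qed.

Lemma valid_mem Z s : is_zigzag F Z -> s \in Z -> valid s.
Proof. by move=> /zz_of [z [g h]] /h [i ->]; exact: gv. Qed.

Lemma Z_of t : valid t -> exists Z, is_zigzag F Z /\ t \in Z.
Proof.
move=> /gen [z [g e]]; exists (zset z); split; first exact: zset_zz.
by apply/zsetP; exists 0.
Qed.

Lemma pred_mem Z x y w : is_zigzag F Z -> (x, y, w) \in Z -> exists2 v, (v, x, y) \in Z & v != w.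
Proof.
move=> /zz_of [z [g h]] hs.
have [i ei] := shift_trips g 1 (proj1 (h _) hs).
rewrite addn1 in ei; case: ei => e0 e1 e2.
exists (z i); first by apply/h; exists i; rewrite /trip e0 e1.
by rewrite e2; exact: g3.
Qed.

Lemma succ_mem Z x y w : is_zigzag F Z -> (x, y, w) \in Z -> exists v, (y, w, v) \in Z.
Proof.
move=> /zz_of [z [g h]] /h [i ei].
case: ei => e0 e1 e2.
by exists (z i.+3); apply/h; exists i.+1; rewrite /trip e1 e2.
Qed.

Variable tau : {set {set V * V * V}}.
Hypothesis ht1 : forall Z, Z \in tau -> is_zigzag F Z.
Hypothesis ht2 : forall Z, is_zigzag F Z -> #|tau :&: [set Z; rev_zz Z]| = 1.

Lemma cardI2 (T : finType) (S : {set T}) x y : x != y -> #|S :&: [set x; y]| = (x \in S) + (y \in S).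
Proof.
move=> xy.
have L := (negbTE xy, negbTE (nsym xy)).
case: (boolP (x \in S)) => hx; case: (boolP (y \in S)) => hy.
- have -> : S :&: [set x; y] = [set x; y].
    apply/setP => v; rewrite !inE; have [->|vx] := eqVneq v x; [|have [->|vy] := eqVneq v y];
    by rewrite ?hx ?hy ?L ?andbF.
  by rewrite cards2 xy.
- have -> : S :&: [set x; y] = [set x].
    apply/setP => v; rewrite !inE; have [->|vx] := eqVneq v x; [|have [->|vy] := eqVneq v y];
    by rewrite ?hx ?(negbTE hy) ?L ?andbF.
  by rewrite cards1.
- have -> : S :&: [set x; y] = [set y].
    apply/setP => v; rewrite !inE; have [->|vx] := eqVneq v x; [|have [->|vy] := eqVneq v y];
    by rewrite ?(negbTE hx) ?hy ?L ?andbF.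
  by rewrite cards1.
- have -> : S :&: [set x; y] = set0.
    apply/setP => v; rewrite !inE; have [->|vx] := eqVneq v x; [|have [->|vy] := eqVneq v y];
    by rewrite ?(negbTE hx) ?(negbTE hy) ?L ?andbF.
  by rewrite cards0.
Qed.

Lemma sum_one G t : is_zigzag F G -> t \in G -> \sum_(Z in tau) (t \in Z) = (G \in tau).
Proof.
move=> zG tG.
rewrite (eq_bigr (fun Z => nat_of_bool (Z == G))); last first.
  move=> Z hZ; case: (boolP (t \in Z)) => tZ.
    by rewrite (zz_unique (ht1 hZ) zG tZ tG) eqxx.
  by case: eqP tZ => // ->; rewrite tG.
case: (boolP (G \in tau)) => hG.
  rewrite (bigD1 G) //= eqxx big1 // => Z /andP[_ /negbTE ->] //.
by rewrite big1 // => Z hZ; case: eqP hZ hG => // -> ->.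
Qed.

Lemma trav_formula u w a b Ga Gb : a != b -> (forall c, valid (u, w, c) -> c = a \/ c = b) ->
  is_zigzag F Ga -> (u, w, a) \in Ga -> is_zigzag F Gb -> (u, w, b) \in Gb ->
  trav tau u w = (Ga \in tau) + (Gb \in tau).
Proof.
move=> ab cl zA hA zB hB.
rewrite /trav (eq_bigr (fun Z : {set V * V * V} => ((u, w, a) \in Z) + ((u, w, b) \in Z))); last first.
  move=> Z hZ.
  have -> : [set s in Z | (s.1.1 == u) && (s.1.2 == w)] = Z :&: [set (u, w, a); (u, w, b)].
    apply/setP => -[[x y] c]; rewrite !inE /=; apply/idP/idP.
      case/andP => hs /andP[/eqP ex /eqP ey]; subst x y; apply/andP; split => //.
      by case: (cl c (valid_mem (ht1 hZ) hs)) => ->; rewrite eqxx ?orbT.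
    by case/andP => hs /orP[/eqP e|/eqP e]; case: e => ex ey _; subst x y; rewrite hs !eqxx.
  by rewrite cardI2 //; apply: contra ab => /eqP[->].
by rewrite big_split /= (sum_one zA hA) (sum_one zB hB).
Qed.

Lemma trav_pos Z x y c : Z \in tau -> (x, y, c) \in Z -> 0 < trav tau x y.
Proof.
move=> hZ hs; rewrite /trav (bigD1 Z) //=.
apply: leq_trans (leq_addr _ _); apply/card_gt0P; exists (x, y, c).
by rewrite inE hs !eqxx.
Qed.

Lemma adj_sym u w : adj F u w -> adj F w u.
Proof.
case/andP => uw /existsP[f /andP[fF /andP[uf wf]]].
by rewrite /adj eq_sym uw; apply/existsP; exists f; rewrite fF uf wf.
Qed.

Lemma edge_setup u w : adj F u w -> exists a b Ga Gb, [/\ a != b,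
  (forall c, valid (u, w, c) -> c = a \/ c = b),
  (forall c, valid (w, u, c) -> c = a \/ c = b),
  [/\ is_zigzag F Ga, (u, w, a) \in Ga, is_zigzag F Gb & (u, w, b) \in Gb]
  & (w, u, b) \in rev_zz Ga /\ (w, u, a) \in rev_zz Gb].
Proof.
move=> huw; have [a [b [ab va vb cl]]] := two_faces huw.
have [Ga [zA hA]] := Z_of va; have [Gb [zB hB]] := Z_of vb.
have cl' : forall c, valid (w, u, c) -> c = a \/ c = b.
  by move=> c /valid_rev /valid_rot /cl.
exists a, b, Ga, Gb; split => //; split.
- have [v hv va'] := pred_mem zA hA.
  have : v = b.
    case: (cl v (valid_rot (valid_mem zA hv))) => // e.
    by rewrite e eqxx in va'.
  move=> e; subst v; apply/imsetP; exists (b, u, w) => //.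
- have [v hv vb'] := pred_mem zB hB.
  have : v = a.
    case: (cl v (valid_rot (valid_mem zB hv))) => // e.
    by rewrite e eqxx in vb'.
  move=> e; subst v; apply/imsetP; exists (a, u, w) => //.
Qed.

Lemma pair_one G : is_zigzag F G -> (G \in tau) + (rev_zz G \in tau) = 1.
Proof.
move=> zG; rewrite -cardI2; first exact: ht2.
by rewrite eq_sym; exact: rev_neq.
Qed.

Lemma edge_sum u w : adj F u w -> trav tau u w + trav tau w u = 2.
Proof.
move=> huw; have [a [b [Ga [Gb [ab cl cl' [zA hA zB hB] [rA rB]]]]]] := edge_setup huw.
rewrite (trav_formula ab cl zA hA zB hB).
rewrite (trav_formula ab cl' (rev_zz_zz zB) rB (rev_zz_zz zA) rA).
have := pair_one zA; have := pair_one zB; lia.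
Qed.

Lemma edge_back u w : adj F u w -> trav tau u w = 2 ->
  exists a, [/\ 0 < trav tau w a, 0 < trav tau a u, adj F w a & adj F a u].
Proof.
move=> huw; have [a [b [Ga [Gb [ab cl cl' [zA hA zB hB] [rA rB]]]]]] := edge_setup huw.
rewrite (trav_formula ab cl zA hA zB hB).
case: (boolP (Ga \in tau)) => iA; case: (boolP (Gb \in tau)) => iB //= _.
exists a.
have va := valid_mem zA hA.
have [v hv] := succ_mem zA hA.
have [v' hv' vb'] := pred_mem zB hB.
have ev : v' = a.
  case: (cl v' (valid_rot (valid_mem zB hv'))) => // e.
  by rewrite e eqxx in vb'.
subst v'; split.
- exact: trav_pos iA hv.
- exact: trav_pos iB hv'.
- exact: valid_adj va.
- exact: valid_adj (valid_rot va).
Qed.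

End Geo.

From mathcomp Require Import lra.
Import Order.TTheory GRing.Theory Num.Theory.

Section Markov.
Variable T : finType.
Variable p : T -> T -> rat.
Hypothesis p0 : forall i j, (0 <= p i j)%R.
Local Open Scope ring_scope.

Lemma nstep_ge0 k i j : 0 <= nstep p k i j.
Proof.
elim: k i j => [|k IH] i j /=; first by rewrite ler0n.
by apply: sumr_ge0 => l _; apply: mulr_ge0.
Qed.

Lemma nstep_step k i l j : 0 < p i l -> 0 < nstep p k l j -> 0 < nstep p k.+1 i j.
Proof.
move=> h1 h2 /=; rewrite (bigD1 l) //=.
have h3 : 0 <= \sum_(x | x != l) p i x * nstep p k x j.
  by apply: sumr_ge0 => x _; apply: mulr_ge0 => //; exact: nstep_ge0.
have h4 : 0 < p i l * nstep p k l j by apply: mulr_gt0.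
lra.
Qed.

Lemma sum_pos (I : finType) (G : I -> rat) : (forall x, 0 <= G x) -> 0 < \sum_x G x ->
  exists x, 0 < G x.
Proof.
move=> g0 hs; case: (boolP [exists x, 0 < G x]) => [/existsP[x hx]|h]; first by exists x.
rewrite big1 ?ltxx // in hs => x _.
apply/eqP; rewrite eq_le g0 andbT leNgt; apply/negP => hx.
by move/negP: h; apply; apply/existsP; exists x.
Qed.

Lemma mul_pos (a b : rat) : 0 <= a -> 0 <= b -> 0 < a * b -> 0 < a /\ 0 < b.
Proof.
move=> ha hb hab; split; rewrite lt0r ?ha ?hb andbT; apply/negP => /eqP e;
  by rewrite e ?mul0r ?mulr0 ltxx in hab.
Qed.

Lemma nstep_comp m n i l j : 0 < nstep p m i l -> 0 < nstep p n l j -> 0 < nstep p (m + n) i j.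
Proof.
elim: m i => [|m IH] i /=.
  by case: eqP => [->|_]; rewrite ?ltxx.
move=> h1 h2.
have [x hx] := sum_pos (fun x => mulr_ge0 (p0 i x) (nstep_ge0 m x l)) h1.
have [hx1 hx2] := mul_pos (p0 i x) (nstep_ge0 m x l) hx.
rewrite ?addSn; apply: nstep_step hx1 _; exact: IH.
Qed.

End Markov.

Theorem proposition3 (V : finType) (F : {set {set V}})
  (tau : {set {set V * V * V}}) :
  triangulation F -> z_orientation F tau -> has_face_typeI F tau ->
  ergodic (ptrans tau).
Proof.
move=> [[_ hF3] _ h2 _ hconn] [ht1 ht2] [a [b [c [_ tab tbc tac]]]].
set P := ptrans tau.
have P0 : forall i j, (0 <= P i j)%R.
  move=> i j; rewrite /P /ptrans; apply: divr_ge0; last exact: ler0n.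
  by apply: addr_ge0; [exact: ler0n | apply: mulr_ge0 => //; exact: ler0n].
have Ppos : forall i j, typeI tau i j || typeII tau i j -> (0 < P i j)%R.
  move=> i j h.
  have hn : (0 < typeI tau i j + 2 * typeII tau i j)%N.
    by move: h; case: (typeI _ _ _); case: (typeII _ _ _).
  rewrite /P /ptrans; apply: divr_gt0.
    by rewrite -natrM -natrD ltr0n.
  rewrite ltr0n /zdeg (bigD1 j) //=.
  exact: leq_trans hn (leq_addr _ _).
have n0 : forall x, (0 < nstep P 0 x x)%R by move=> x; rewrite /= eqxx ltr01.
have step1 : forall i j, (0 < P i j)%R -> exists k, (0 < nstep P k i j)%R.
  by move=> i j h; exists 1%N; exact: (nstep_step P0 h (n0 j)).
have trans : forall i l j, (exists k, (0 < nstep P k i l)%R) ->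
    (exists k, (0 < nstep P k l j)%R) -> exists k, (0 < nstep P k i j)%R.
  by move=> i l j [m hm] [n hn]; exists (m + n)%N; exact: (nstep_comp P0 hm hn).
have Rtrav : forall u w, adj F u w -> (0 < trav tau u w)%N -> (0 < P u w)%R.
  move=> u w huw ht; apply: Ppos; have := edge_sum hF3 h2 ht1 ht2 huw.
  rewrite /typeI /typeII; move: (trav tau u w) (trav tau w u) ht => m n hm hs.
  have [e|e] : m = 1%N \/ m = 2%N by lia.
    by rewrite e; have -> : n = 1%N by lia.
  by rewrite e; have -> : n = 0%N by lia.
have adj_reach : forall u w, adj F u w -> exists k, (0 < nstep P k u w)%R.
  move=> u w huw; have hs := edge_sum hF3 h2 ht1 ht2 huw.
  case: (posnP (trav tau u w)) => [h0|hpos]; last exact: step1 _ _ (Rtrav _ _ huw hpos).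
  have hwu : adj F w u := adj_sym huw.
  have h2' : trav tau w u = 2%N by lia.
  have [x [p1 p2 a1 a2]] := edge_back hF3 h2 ht1 hwu h2'.
  exact: trans (step1 _ _ (Rtrav _ _ a1 p1)) (step1 _ _ (Rtrav _ _ a2 p2)).
have irr : irreducible P.
  move=> i j; have := hconn i j; case/connectP => q.
  elim: q i => [i _ ->|y q IH i /= /andP[h hp] hl]; first by exists 0%N.
  exact: trans (adj_reach _ _ h) (IH _ hp hl).
split => // i d Hd.
have Rab : (0 < P a b)%R by apply: Ppos; rewrite tab.
have Rba : (0 < P b a)%R by apply: Ppos; move: tab; rewrite /typeI andbC => ->.
have Rbc : (0 < P b c)%R by apply: Ppos; rewrite tbc.
have Rcb : (0 < P c b)%R by apply: Ppos; move: tbc; rewrite /typeI andbC => ->.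
have c2 : (0 < nstep P 2 a a)%R := nstep_step P0 Rab (nstep_step P0 Rba (n0 a)).
have c3 : (0 < nstep P 3 a a)%R.
  case/orP: tac => h.
    have Rac : (0 < P a c)%R by apply: Ppos; rewrite h orbT.
    exact: (nstep_step P0 Rac (nstep_step P0 Rcb (nstep_step P0 Rba (n0 a)))).
  have Rca : (0 < P c a)%R by apply: Ppos; rewrite h orbT.
  exact: (nstep_step P0 Rab (nstep_step P0 Rbc (nstep_step P0 Rca (n0 a)))).
have [k1 e1] := irr i a; have [k2 e2] := irr a i.
have f2 := nstep_comp P0 e1 (nstep_comp P0 c2 e2).
have f3 := nstep_comp P0 e1 (nstep_comp P0 c3 e2).
have p2 : (0 < k1 + (2 + k2))%N by rewrite addnCA.
have p3 : (0 < k1 + (3 + k2))%N by rewrite addnCA.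
have d2 := Hd _ p2 f2.
have d3 := Hd _ p3 f3.
have := dvdn_sub d3 d2.
have -> : (k1 + (3 + k2) - (k1 + (2 + k2)) = 1)%N by lia.
by rewrite dvdn1 => /eqP.
Qed.
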